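(* Each of the operators $\mathcal{S}$, $\widetilde{\mathcal{S}}$, $\mathcal{S}_{+\Delta}$, $\mathcal{S}_{-\Delta}$, $\widetilde{\mathcal{S}}_\Delta$, $\mathcal{T}^{(r,\pm)}_{rim}$, $\mathcal{S}^{(r,\pm)}_\Delta$, $\mathcal{T}^{(r,s)}_{rim}$, $\widetilde{\mathcal{T}}^{(r)}_{rim}$, $\widetilde{\mathcal{S}}^{(r)}_\Delta$ ($r,s\in\mathbb{N}$) defined below, mapping $\mathbb{D}$ into $\mathbb{D}$, is (a) Lipschitz with respect to $\|\cdot\|$, hence continuous in the $\|\cdot\|$ norm; and (b) $\Lambda$-compatible; consequently each of them is jointly $J_1$-continuous at every $x\in\mathbb{D}$.
   Context: $\mathbb{D}=\mathbb{D}([0,1],\mathbb{R})$ is the space of càdlàg functions on $[0,1]$ with the Skorokhod $J_1$-topology, $\|x\|=\sup_{0\le\tau\le1}|x(\tau)|$. $\Lambda$ is the set of continuous strictly increasing $\lambda:[0,1]\to[0,1]$ with $\lambda(0)=0,\lambda(1)=1$, and $I$ is the identity. $x_n\to x$ in $J_1$ means there are $\lambda_n\in\Lambda$ with $\|\lambda_n-I\|\vee\|x_n\circ\lambda_n-x\|\to0$. $\Psi:\mathbb{D}\to\mathbb{D}$ is $\Lambda$-compatible if $\Psi(x)\circ\lambda=\Psi(x\circ\lambda)$ for all $x\in\mathbb{D},\lambda\in\Lambda$; it is jointly $J_1$-continuous at $x$ if for every $x_n\to x$ in $J_1$ there exist $\lambda_n\in\Lambda$ with simultaneously $\|\lambda_n-I\|\to0$,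 $\|x_n\circ\lambda_n-x\|\to0$, $\|\Psi(x_n)\circ\lambda_n-\Psi(x)\|\to0$. For $x\in\mathbb{D}$ let $\Delta x(\tau)=x(\tau)-x(\tau-)$ for $\tau>0$ and $\Delta x(0)=0$. Define, for $\tau\in[0,1]$: (i) $\mathcal{S}(x)(\tau)=\sup_{0\le s\le\tau}x(s)$; (ii) $\widetilde{\mathcal{S}}(x)(\tau)=\sup_{0\le s\le\tau}|x(s)|$; (iii) $\mathcal{S}_{\pm\Delta}(x)(\tau)=\mathcal{S}_\Delta(\pm x)(\tau):=\sup_{0\le s\le\tau}\Delta(\pm x)(s)$; (iv) $\widetilde{\mathcal{S}}_\Delta(x)(\tau)=\sup_{0\le s\le\tau}|\Delta x(s)|$. (v) $\mathcal{T}^{(1,\pm)}_{rim}(x)=x\mp\mathcal{S}_{\pm\Delta}(x)$ and for $r\ge2$, $\mathcal{T}^{(r,\pm)}_{rim}(x)=\mathcal{T}^{(1,\pm)}_{rim}\circ\mathcal{T}^{(r-1,\pm)}_{rim}(x)$. (vi) $\mathcal{S}^{(1,\pm)}_\Delta(x)=\mathcal{S}_{\pm\Delta}(x)$ and for $r\ge2$, $\mathcal{S}^{(r,\pm)}_\Delta(x)=\mathcal{S}^{(1,\pm)}_\Delta\circ\mathcal{T}^{(r-1,\pm)}_{rim}(x)$. (vii) $\mathcal{T}^{(r,s)}_{rim}(x)=\mathcal{T}^{(r,+)}_{rim}\circ\mathcal{T}^{(s,-)}_{rim}(x)=\mathcal{T}^{(s,-)}_{rim}\circ\mathcal{T}^{(r,+)}_{rim}(x)$.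 (viii) $\widetilde{\mathcal{T}}^{(1)}_{rim}(x)=x-\widetilde{\mathcal{S}}_\Delta(x)$ and for $r\ge2$, $\widetilde{\mathcal{T}}^{(r)}_{rim}(x)=\widetilde{\mathcal{T}}^{(1)}_{rim}\circ\widetilde{\mathcal{T}}^{(r-1)}_{rim}(x)$. (ix) $\widetilde{\mathcal{S}}^{(1)}_\Delta(x)=\widetilde{\mathcal{S}}_\Delta(x)$ and for $r\ge2$, $\widetilde{\mathcal{S}}^{(r)}_\Delta(x)=\widetilde{\mathcal{S}}_\Delta\circ\widetilde{\mathcal{T}}^{(r-1)}_{rim}(x)$. *)

(* Defs.v *)
From Stdlib Require Import Reals Lra.
From Coquelicot Require Import Coquelicot.
Open Scope R_scope.

(* Elements of D are represented by functions R -> R; only their values on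
   [0,1] matter. *)
Definition I01 (t : R) : Prop := 0 <= t <= 1.

Definition cadlag (x : R -> R) : Prop :=
  (forall t, 0 <= t < 1 -> filterlim x (at_right t) (locally (x t))) /\
  (forall t, 0 < t <= 1 -> exists l : R, filterlim x (at_left t) (locally l)).

Definition supOn (f : R -> R) (tau : R) : R :=
  real (Lub_Rbar (fun v => exists s, 0 <= s <= tau /\ v = f s)).

Definition supnorm (f : R -> R) : R :=
  real (Lub_Rbar (fun v => exists s, I01 s /\ v = Rabs (f s))).

(* left limit x(t-), computed along t - 1/(n+1) (equals the left limit for
   càdlàg x and t > 0) *)
Definition leftlim (x : R -> R) (t : R) : R :=
  real (Lim_seq (fun n => x (t - / INR (S n)))).

Definition Delta (x : R -> R) (t : R) : R :=
  if Rle_dec t 0 then 0 else x t - leftlim x t.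

Definition opp (x : R -> R) : R -> R := fun t => - x t.
Definition pm (b : bool) (x : R -> R) : R -> R := if b then x else opp x.

Definition Ssup (x : R -> R) : R -> R := fun tau => supOn x tau.
Definition Ssup_abs (x : R -> R) : R -> R := fun tau => supOn (fun s => Rabs (x s)) tau.
(* (iii) S_{+Delta} (b = true), S_{-Delta} (b = false): S_Delta(+-x) *)
Definition S_Delta (x : R -> R) : R -> R := fun tau => supOn (Delta x) tau.
Definition S_pmDelta (b : bool) (x : R -> R) : R -> R := S_Delta (pm b x).
Definition S_Delta_abs (x : R -> R) : R -> R :=
  fun tau => supOn (fun s => Rabs (Delta x s)) tau.

Definition T1_rim (b : bool) (x : R -> R) : R -> R :=
  fun t => if b then x t - S_pmDelta b x t else x t + S_pmDelta b x t.
Definition T_rim (r : nat) (b : bool) (x : R -> R) : R -> R :=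
  Nat.iter r (T1_rim b) x.
Definition S_rim (r : nat) (b : bool) (x : R -> R) : R -> R :=
  S_pmDelta b (T_rim (r - 1) b x).
Definition T_rim2 (r s : nat) (x : R -> R) : R -> R :=
  T_rim r true (T_rim s false x).
Definition Tt1_rim (x : R -> R) : R -> R := fun t => x t - S_Delta_abs x t.
Definition Tt_rim (r : nat) (x : R -> R) : R -> R := Nat.iter r Tt1_rim x.
Definition St_rim (r : nat) (x : R -> R) : R -> R :=
  S_Delta_abs (Tt_rim (r - 1) x).

Inductive in_family : ((R -> R) -> (R -> R)) -> Prop :=
| fam_S : in_family Ssup
| fam_St : in_family Ssup_abs
| fam_SpD : in_family (S_pmDelta true)
| fam_SmD : in_family (S_pmDelta false)
| fam_StD : in_family S_Delta_abs
| fam_T : forall r b, (1 <= r)%nat -> in_family (T_rim r b)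
| fam_SD : forall r b, (1 <= r)%nat -> in_family (S_rim r b)
| fam_T2 : forall r s, (1 <= r)%nat -> (1 <= s)%nat -> in_family (T_rim2 r s)
| fam_Tt : forall r, (1 <= r)%nat -> in_family (Tt_rim r)
| fam_StDr : forall r, (1 <= r)%nat -> in_family (St_rim r).

Definition in_Lambda (l : R -> R) : Prop :=
  (forall t, I01 t -> filterlim l (within I01 (locally t)) (locally (l t))) /\
  (forall s t, I01 s -> I01 t -> s < t -> l s < l t) /\
  l 0 = 0 /\ l 1 = 1.

Definition unif_cv (fn : nat -> R -> R) (f : R -> R) : Prop :=
  forall eps : R, 0 < eps ->
    exists N : nat, forall n, (N <= n)%nat -> forall t, I01 t -> Rabs (fn n t - f t) <= eps.

Definition J1_cv (xn : nat -> R -> R) (x : R -> R) : Prop :=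
  exists ln : nat -> R -> R, (forall n, in_Lambda (ln n)) /\
    unif_cv ln (fun t => t) /\ unif_cv (fun n t => xn n (ln n t)) x.

Definition norm_lipschitz (Psi : (R -> R) -> (R -> R)) : Prop :=
  exists K : R, 0 <= K /\ forall x y, cadlag x -> cadlag y ->
    supnorm (fun t => Psi x t - Psi y t) <= K * supnorm (fun t => x t - y t).

Definition Lambda_compatible (Psi : (R -> R) -> (R -> R)) : Prop :=
  forall x l, cadlag x -> in_Lambda l ->
    forall t, I01 t -> Psi x (l t) = Psi (fun u => x (l u)) t.

Definition jointly_J1_continuous_at (Psi : (R -> R) -> (R -> R)) (x : R -> R) : Prop :=
  forall xn : nat -> R -> R, (forall n, cadlag (xn n)) -> J1_cv xn x ->
    exists ln : nat -> R -> R, (forall n, in_Lambda (ln n)) /\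
      unif_cv ln (fun t => t) /\
      unif_cv (fun n t => xn n (ln n t)) x /\
      unif_cv (fun n t => Psi (xn n) (ln n t)) (Psi x).

(* Main.v *)
Require Import Defs.
From Stdlib Require Import Reals Lra Lia Classical.
From Coquelicot Require Import Coquelicot.
Import Defs.
Open Scope R_scope.

Lemma lub_ub (E : R -> Prop) v :
  (exists B, forall w, E w -> w <= B) -> E v -> v <= real (Lub_Rbar E).
Proof.
  intros [B HB] Ev. destruct (Lub_Rbar_correct E) as [Hub Hl].
  destruct (Lub_Rbar E) as [r| |] eqn:Hq; simpl.
  - apply (Hub v Ev).
  - exfalso. specialize (Hl (Finite B)). simpl in Hl. apply Hl. intros w Ew. simpl. now apply HB.
  - specialize (Hub v Ev). simpl in Hub. contradiction.
Qed.

Lemma lub_le (E : R -> Prop) B :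
  (exists v, E v) -> (forall w, E w -> w <= B) -> real (Lub_Rbar E) <= B.
Proof.
  intros [v Ev] HB. destruct (Lub_Rbar_correct E) as [Hub Hl].
  destruct (Lub_Rbar E) as [r| |] eqn:Hq; simpl.
  - specialize (Hl (Finite B)). simpl in Hl. apply Hl. intros w Ew. simpl. now apply HB.
  - exfalso. specialize (Hl (Finite B)). simpl in Hl. apply Hl. intros w Ew. simpl. now apply HB.
  - specialize (Hub v Ev). simpl in Hub. contradiction.
Qed.

Definition RC (x : R -> R) t := forall e, 0 < e -> exists d, 0 < d /\
  forall u, t < u < t + d -> Rabs (x u - x t) < e.
Definition LL (x : R -> R) t l := forall e, 0 < e -> exists d, 0 < d /\
  forall u, t - d < u < t -> Rabs (x u - l) < e.

Lemma right_iff (x : R -> R) t l :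
  filterlim x (at_right t) (locally l) <-> forall e, 0 < e -> exists d, 0 < d /\
  forall u, t < u < t + d -> Rabs (x u - l) < e.
Proof.
  rewrite filterlim_locally. split.
  - intros H e He. destruct (H (mkposreal e He)) as [d Hd]. exists d. split. apply cond_pos.
    intros u Hu. apply (Hd u). change (Rabs (u - t) < d). rewrite Rabs_right; lra. lra.
  - intros H [e He]. destruct (H e He) as [d [Hd0 Hd]]. exists (mkposreal d Hd0).
    intros u Hu Htu. change (Rabs (u - t) < d) in Hu. apply Rabs_def2 in Hu.
    apply (Hd u). lra.
Qed.

Lemma left_iff (x : R -> R) t l :
  filterlim x (at_left t) (locally l) <-> LL x t l.
Proof.
  unfold LL. rewrite filterlim_locally. split.
  - intros H e He. destruct (H (mkposreal e He)) as [d Hd]. exists d. split. apply cond_pos.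
    intros u Hu. apply (Hd u). change (Rabs (u - t) < d). rewrite Rabs_left; lra. lra.
  - intros H [e He]. destruct (H e He) as [d [Hd0 Hd]]. exists (mkposreal d Hd0).
    intros u Hu Htu. change (Rabs (u - t) < d) in Hu. apply Rabs_def2 in Hu.
    apply (Hd u). lra.
Qed.

Lemma cadlag_iff x : cadlag x <->
  (forall t, 0 <= t < 1 -> RC x t) /\ (forall t, 0 < t <= 1 -> exists l, LL x t l).
Proof.
  unfold cadlag, RC. split; intros [H1 H2]; split.
  - intros t Ht. apply right_iff. auto.
  - intros t Ht. destruct (H2 t Ht) as [l Hl]. exists l. now apply left_iff.
  - intros t Ht. apply right_iff. auto.
  - intros t Ht. destruct (H2 t Ht) as [l Hl]. exists l. now apply left_iff.
Qed.

Lemma local_bound x : cadlag x -> forall t, I01 t ->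
  exists d B, 0 < d /\ forall s, I01 s -> Rabs (s - t) < d -> Rabs (x s) <= B.
Proof.
  intros Hx t Ht. apply cadlag_iff in Hx. destruct Hx as [H1 H2]. unfold I01 in *.
  assert (E1 : exists d1, 0 < d1 /\ forall s, t < s < t + d1 -> s <= 1 -> Rabs (x s) <= Rabs (x t) + 1).
  { destruct (Rlt_le_dec t 1) as [Ht1|Ht1].
    - destruct (H1 t (conj (proj1 Ht) Ht1) 1 Rlt_0_1) as [d [Hd Hd']]. exists d. split; auto.
      intros s Hs _. specialize (Hd' s Hs).
      pose proof (Rabs_triang_inv (x s) (x t)). lra.
    - exists 1. split. lra. intros. lra. }
  assert (E2 : exists d2 l, 0 < d2 /\ forall s, t - d2 < s < t -> 0 <= s -> Rabs (x s) <= Rabs l + 1).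
  { destruct (Rle_lt_dec t 0) as [Ht0|Ht0].
    - exists 1, 0. split. lra. intros. lra.
    - destruct (H2 t (conj Ht0 (proj2 Ht))) as [l Hl].
      destruct (Hl 1 Rlt_0_1) as [d [Hd Hd']]. exists d, l. split; auto.
      intros s Hs _. specialize (Hd' s Hs).
      pose proof (Rabs_triang_inv (x s) l). lra. }
  destruct E1 as [d1 [Hd1 E1]]. destruct E2 as [d2 [l [Hd2 E2]]].
  exists (Rmin d1 d2), (Rabs (x t) + 1 + Rabs l + 1). split.
  { apply Rmin_glb_lt; auto. }
  intros s Hs Hst. apply Rabs_def2 in Hst. pose proof (Rmin_l d1 d2). pose proof (Rmin_r d1 d2).
  pose proof (Rabs_pos l). pose proof (Rabs_pos (x t)).
  destruct (Rtotal_order s t) as [Hlt|[Heq|Hgt]].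
  - specialize (E2 s ltac:(lra) ltac:(lra)). lra.
  - subst. lra.
  - specialize (E1 s ltac:(lra) ltac:(lra)). lra.
Qed.

Lemma cadlag_bounded x : cadlag x -> exists B, forall s, I01 s -> Rabs (x s) <= B.
Proof.
  intros Hx.
  set (A := fun t => 0 <= t <= 1 /\ exists B, forall s, 0 <= s <= t -> Rabs (x s) <= B).
  assert (HA0 : A 0).
  { split. lra. exists (Rabs (x 0)). intros s Hs. replace s with 0 by lra. lra. }
  assert (Hb : bound A). { exists 1. intros t [Ht _]. lra. }
  destruct (completeness A Hb (ex_intro _ 0 HA0)) as [c [Hc1 Hc2]].
  assert (Hc0 : 0 <= c) by (apply Hc1; auto).
  assert (Hc1' : c <= 1). { apply Hc2. intros t [Ht _]. lra. }
  destruct (local_bound x Hx c (conj Hc0 Hc1')) as [d [Bc [Hd HB]]].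
  assert (Ha : exists a, A a /\ c - d < a).
  { apply NNPP. intro Hn. assert (c <= c - d). { apply Hc2. intros a Ha.
      destruct (Rle_lt_dec a (c - d)); auto. exfalso. apply Hn. exists a; auto. } lra. }
  destruct Ha as [a [[Ha1 [Ba HBa]] Hac]].
  set (c' := Rmin (c + d/2) 1).
  assert (HAc' : A c').
  { split. { unfold c'. split. apply Rmin_glb; lra. apply Rmin_r. }
    exists (Rmax Ba Bc). intros s Hs.
    destruct (Rle_lt_dec s a) as [Hsa|Hsa].
    - eapply Rle_trans. apply HBa. lra. apply Rmax_l.
    - eapply Rle_trans. apply HB. unfold I01. pose proof (Rmin_r (c + d/2) 1). fold c' in H. lra.
      pose proof (Rmin_l (c + d/2) 1). fold c' in H. apply Rabs_def1. lra.
      assert (a <= c) by (apply Hc1; split; auto; exists Ba; auto). lra. apply Rmax_r. }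
  assert (c' <= c) by (apply Hc1; auto).
  assert (Hc'1 : c' = 1).
  { unfold c' in *. destruct (Rle_lt_dec (c + d/2) 1).
    rewrite Rmin_left in H; lra. rewrite Rmin_right; lra. }
  rewrite Hc'1 in HAc'. destruct HAc' as [_ [B HB']]. exists B. intros s Hs. apply HB'. exact Hs.
Qed.

Lemma small_inv d : 0 < d -> exists N, forall n, (N <= n)%nat -> 0 < / INR (S n) < d.
Proof.
  intros Hd. destruct (archimed (/ d)) as [H _].
  assert (Hp : (0 < up (/ d))%Z). { apply lt_0_IZR. pose proof (Rinv_0_lt_compat d Hd). lra. }
  exists (Z.to_nat (up (/ d))). intros n Hn.
  assert (HI : / d < INR (S n)).
  { rewrite INR_IZR_INZ in *. eapply Rlt_le_trans. apply H. apply IZR_le.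
    rewrite <- (Znat.Z2Nat.id (up (/d))) by lia. apply Znat.Nat2Z.inj_le. lia. }
  pose proof (Rinv_0_lt_compat d Hd).
  split. apply Rinv_0_lt_compat. lra.
  rewrite <- (Rinv_inv d). apply Rinv_lt_contravar. apply Rmult_lt_0_compat; lra. exact HI.
Qed.

Lemma LL_seq x t l : LL x t l -> is_lim_seq (fun n => x (t - / INR (S n))) l.
Proof.
  intros H. apply is_lim_seq_spec. intros [e He].
  destruct (H e He) as [d [Hd Hd']]. destruct (small_inv d Hd) as [N HN].
  exists N. intros n Hn. specialize (HN n Hn). apply Hd'. lra.
Qed.

Lemma leftlim_LL x t l : LL x t l -> leftlim x t = l.
Proof.
  intros H. unfold leftlim. rewrite (is_lim_seq_unique _ _ (LL_seq x t l H)). reflexivity.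
Qed.

Lemma LL_unique x t l1 l2 : LL x t l1 -> LL x t l2 -> l1 = l2.
Proof.
  intros H1 H2. rewrite <- (leftlim_LL x t l1 H1). apply leftlim_LL; auto.
Qed.

Lemma LL_diff x y t lx ly e : 0 < t -> LL x t lx -> LL y t ly ->
  (forall s, I01 s -> Rabs (x s - y s) <= e) -> t <= 1 -> Rabs (lx - ly) <= e.
Proof.
  intros Ht Hx Hy Hxy Ht1.
  pose proof (is_lim_seq_abs _ _ (is_lim_seq_minus' _ _ _ _ (LL_seq x t lx Hx) (LL_seq y t ly Hy))) as Hl.
  assert (Hev : eventually (fun n => Rabs (x (t - / INR (S n)) - y (t - / INR (S n))) <= e)).
  { destruct (small_inv t Ht) as [N HN]; exists N; intros n Hn; specialize (HN n Hn); apply Hxy; unfold I01; lra. }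
  assert (Hle := is_lim_seq_le_loc _ (fun _ => e) _ e Hev Hl (is_lim_seq_const e)).
  exact Hle.
Qed.

Lemma Delta_LL x t l : 0 < t -> LL x t l -> Delta x t = x t - l.
Proof.
  intros Ht H. unfold Delta. destruct (Rle_dec t 0). lra. now rewrite (leftlim_LL x t l H).
Qed.

Lemma cadlag_LL x t : cadlag x -> 0 < t <= 1 -> exists l, LL x t l.
Proof. intros H Ht. apply cadlag_iff in H. apply H; auto. Qed.

Lemma Delta_lip x y e : cadlag x -> cadlag y ->
  (forall s, I01 s -> Rabs (x s - y s) <= e) ->
  forall t, I01 t -> Rabs (Delta x t - Delta y t) <= 2 * e.
Proof.
  intros Hx Hy Hxy t Ht.
  assert (He : 0 <= e). { eapply Rle_trans. apply Rabs_pos. apply (Hxy 0). unfold I01; lra. }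
  destruct (Rle_lt_dec t 0) as [Ht0|Ht0].
  - unfold Delta. destruct (Rle_dec t 0); [|lra]. rewrite Rminus_0_r, Rabs_R0. lra.
  - destruct (cadlag_LL x t Hx (conj Ht0 (proj2 Ht))) as [lx Hlx].
    destruct (cadlag_LL y t Hy (conj Ht0 (proj2 Ht))) as [ly Hly].
    rewrite (Delta_LL x t lx Ht0 Hlx), (Delta_LL y t ly Ht0 Hly).
    pose proof (LL_diff x y t lx ly e Ht0 Hlx Hly Hxy (proj2 Ht)).
    pose proof (Hxy t Ht).
    replace (x t - lx - (y t - ly)) with ((x t - y t) - (lx - ly)) by ring.
    eapply Rle_trans. apply Rabs_triang. rewrite Rabs_Ropp. lra.
Qed.

Lemma cadlag_const c : cadlag (fun _ => c).
Proof.
  apply cadlag_iff. split.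
  - intros t _ e He. exists 1. split. lra. intros. rewrite Rminus_eq_0, Rabs_R0. lra.
  - intros t _. exists c. intros e He. exists 1. split. lra. intros. rewrite Rminus_eq_0, Rabs_R0. lra.
Qed.

Lemma Delta_const c t : Delta (fun _ => c) t = 0.
Proof.
  unfold Delta. destruct (Rle_dec t 0). auto. unfold leftlim. rewrite Lim_seq_const. simpl. ring.
Qed.

Lemma Delta_bounded x : cadlag x -> exists B, forall s, I01 s -> Rabs (Delta x s) <= B.
Proof.
  intros Hx. destruct (cadlag_bounded x Hx) as [B HB]. exists (2 * B). intros s Hs.
  pose proof (Delta_lip x (fun _ => 0) B Hx (cadlag_const 0)) as H.
  specialize (H ltac:(intros u Hu; rewrite Rminus_0_r; auto) s Hs).
  rewrite Delta_const, Rminus_0_r in H. exact H.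
Qed.

Definition bnd (f : R -> R) := exists B, forall s, I01 s -> Rabs (f s) <= B.

Lemma supOn_ge f s t : bnd f -> 0 <= s <= t -> t <= 1 -> f s <= supOn f t.
Proof.
  intros [B HB] Hs Ht. unfold supOn. apply lub_ub.
  - exists B. intros w [u [Hu ->]]. eapply Rle_trans. apply Rle_abs. apply HB. unfold I01; lra.
  - exists s. auto.
Qed.

Lemma supOn_le f t B : 0 <= t -> (forall s, 0 <= s <= t -> f s <= B) -> supOn f t <= B.
Proof.
  intros Ht H. unfold supOn. apply lub_le.
  - exists (f 0). exists 0. split; auto. lra.
  - intros w [u [Hu ->]]. auto.
Qed.

Lemma supOn_mono f t1 t2 : bnd f -> 0 <= t1 <= t2 -> t2 <= 1 -> supOn f t1 <= supOn f t2.
Proof.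
  intros Hf H1 H2. apply supOn_le. lra. intros s Hs. apply supOn_ge; auto. lra.
Qed.

Lemma supOn_lip f g e t : bnd f -> bnd g -> (forall s, I01 s -> Rabs (f s - g s) <= e) ->
  I01 t -> Rabs (supOn f t - supOn g t) <= e.
Proof.
  intros Hf Hg H Ht. unfold I01 in Ht. apply Rabs_le. split.
  - assert (supOn g t <= supOn f t + e).
    { apply supOn_le. lra. intros s Hs. pose proof (supOn_ge f s t Hf Hs ltac:(lra)).
      pose proof (H s ltac:(unfold I01; lra)). apply Rabs_le_between in H1. lra. }
    lra.
  - assert (supOn f t <= supOn g t + e).
    { apply supOn_le. lra. intros s Hs. pose proof (supOn_ge g s t Hg Hs ltac:(lra)).
      pose proof (H s ltac:(unfold I01; lra)). apply Rabs_le_between in H1. lra. }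
    lra.
Qed.

Definition PL (P : (R -> R) -> (R -> R)) (K : R) := forall x y e, cadlag x -> cadlag y ->
  (forall s, I01 s -> Rabs (x s - y s) <= e) -> forall t, I01 t -> Rabs (P x t - P y t) <= K * e.

Lemma bnd_cadlag x : cadlag x -> bnd x.
Proof. apply cadlag_bounded. Qed.

Lemma bnd_abs f : bnd f -> bnd (fun s => Rabs (f s)).
Proof. intros [B HB]. exists B. intros s Hs. rewrite Rabs_Rabsolu. auto. Qed.

Lemma bnd_Delta x : cadlag x -> bnd (Delta x).
Proof. apply Delta_bounded. Qed.

Lemma PL_Ssup : PL Ssup 1.
Proof.
  intros x y e Hx Hy H t Ht. unfold Ssup. rewrite Rmult_1_l.
  apply supOn_lip; auto using bnd_cadlag.
Qed.

Lemma abs_diff a b : Rabs (Rabs a - Rabs b) <= Rabs (a - b).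
Proof. apply Rabs_le. pose proof (Rabs_triang_inv a b). pose proof (Rabs_triang_inv b a).
  rewrite Rabs_minus_sym in H0. lra. Qed.

Lemma PL_Ssup_abs : PL Ssup_abs 1.
Proof.
  intros x y e Hx Hy H t Ht. unfold Ssup_abs. rewrite Rmult_1_l.
  apply supOn_lip; auto using bnd_cadlag, bnd_abs.
  intros s Hs. eapply Rle_trans. apply abs_diff. auto.
Qed.

Lemma PL_S_Delta : PL S_Delta 2.
Proof.
  intros x y e Hx Hy H t Ht. unfold S_Delta.
  apply supOn_lip; auto using bnd_Delta. intros s Hs. apply (Delta_lip x y); auto.
Qed.

Lemma PL_S_Delta_abs : PL S_Delta_abs 2.
Proof.
  intros x y e Hx Hy H t Ht. unfold S_Delta_abs.
  apply supOn_lip; auto using bnd_Delta, bnd_abs. intros s Hs.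
  eapply Rle_trans. apply abs_diff. apply (Delta_lip x y); auto.
Qed.

Lemma cadlag_opp x : cadlag x -> cadlag (opp x).
Proof.
  intros H. apply cadlag_iff in H. destruct H as [H1 H2]. apply cadlag_iff. unfold opp. split.
  - intros t Ht e He. destruct (H1 t Ht e He) as [d [Hd Hd']]. exists d. split; auto.
    intros u Hu. replace (- x u - - x t) with (- (x u - x t)) by ring. rewrite Rabs_Ropp. auto.
  - intros t Ht. destruct (H2 t Ht) as [l Hl]. exists (- l). intros e He.
    destruct (Hl e He) as [d [Hd Hd']]. exists d. split; auto.
    intros u Hu. replace (- x u - - l) with (- (x u - l)) by ring. rewrite Rabs_Ropp. auto.
Qed.

Lemma cadlag_pm b x : cadlag x -> cadlag (pm b x).
Proof. destruct b; simpl; auto using cadlag_opp. Qed.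

Lemma pm_diff b x y s : Rabs (pm b x s - pm b y s) = Rabs (x s - y s).
Proof. destruct b; simpl; auto. unfold opp. replace (- x s - - y s) with (- (x s - y s)) by ring.
  apply Rabs_Ropp. Qed.

Lemma PL_S_pmDelta b : PL (S_pmDelta b) 2.
Proof.
  intros x y e Hx Hy H t Ht. unfold S_pmDelta. apply PL_S_Delta; auto using cadlag_pm.
  intros s Hs. rewrite pm_diff. auto.
Qed.

Lemma PL_T1 b : PL (T1_rim b) 3.
Proof.
  intros x y e Hx Hy H t Ht. pose proof (PL_S_pmDelta b x y e Hx Hy H t Ht).
  pose proof (H t Ht). unfold T1_rim. destruct b.
  - replace (x t - S_pmDelta true x t - (y t - S_pmDelta true y t)) with
      ((x t - y t) - (S_pmDelta true x t - S_pmDelta true y t)) by ring.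
    eapply Rle_trans. apply Rabs_triang. rewrite Rabs_Ropp. lra.
  - replace (x t + S_pmDelta false x t - (y t + S_pmDelta false y t)) with
      ((x t - y t) + (S_pmDelta false x t - S_pmDelta false y t)) by ring.
    eapply Rle_trans. apply Rabs_triang. lra.
Qed.

Lemma PL_Tt1 : PL Tt1_rim 3.
Proof.
  intros x y e Hx Hy H t Ht. pose proof (PL_S_Delta_abs x y e Hx Hy H t Ht).
  pose proof (H t Ht). unfold Tt1_rim.
  replace (x t - S_Delta_abs x t - (y t - S_Delta_abs y t)) with
      ((x t - y t) - (S_Delta_abs x t - S_Delta_abs y t)) by ring.
  eapply Rle_trans. apply Rabs_triang. rewrite Rabs_Ropp. lra.
Qed.

Lemma small_jumps x : cadlag x -> forall tau, 0 <= tau < 1 -> forall e, 0 < e ->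
  exists h, 0 < h /\ forall s, tau < s < tau + h -> s <= 1 -> Rabs (Delta x s) <= e.
Proof.
  intros Hx tau Htau e He. pose proof Hx as Hx'. apply cadlag_iff in Hx'. destruct Hx' as [H1 H2].
  destruct (H1 tau Htau (e/4) ltac:(lra)) as [d [Hd Hd']]. exists d. split; auto.
  intros s Hs Hs1. destruct (cadlag_LL x s Hx ltac:(lra)) as [l Hl].
  rewrite (Delta_LL x s l ltac:(lra) Hl).
  destruct (Hl (e/4) ltac:(lra)) as [d2 [Hd2 Hd2']].
  set (u := (Rmax tau (s - d2) + s) / 2).
  assert (Hu1 : tau < u < s). { unfold u. pose proof (Rmax_l tau (s - d2)). pose proof (Rmax_lub_lt tau (s-d2) s ltac:(lra) ltac:(lra)). lra. }
  assert (Hu2 : s - d2 < u). { unfold u. pose proof (Rmax_r tau (s - d2)). lra. }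
  pose proof (Hd' s ltac:(lra)). pose proof (Hd' u ltac:(lra)). pose proof (Hd2' u ltac:(lra)).
  apply Rabs_def2 in H. apply Rabs_def2 in H0. apply Rabs_def2 in H3. apply Rabs_le. lra.
Qed.

Lemma supOn_cadlag f : bnd f -> f 0 = 0 ->
  (forall tau, 0 <= tau < 1 -> forall e, 0 < e -> exists h, 0 < h /\
     forall s, tau < s < tau + h -> s <= 1 -> f s <= e) ->
  cadlag (supOn f).
Proof.
  intros Hb H0 Hj. apply cadlag_iff. split.
  - intros tau Htau e He. destruct (Hj tau Htau (e/2) ltac:(lra)) as [h [Hh Hh']].
    exists (Rmin h (1 - tau)). split. apply Rmin_glb_lt; lra.
    intros u Hu. pose proof (Rmin_l h (1 - tau)). pose proof (Rmin_r h (1 - tau)).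
    assert (A1 : supOn f tau <= supOn f u) by (apply supOn_mono; auto; lra).
    assert (A0 : 0 <= supOn f tau) by (rewrite <- H0; apply supOn_ge; auto; lra).
    assert (A2 : supOn f u <= supOn f tau + e/2).
    { apply supOn_le. lra. intros s Hs. destruct (Rle_lt_dec s tau).
      - pose proof (supOn_ge f s tau Hb ltac:(lra) ltac:(lra)). lra.
      - pose proof (Hh' s ltac:(lra) ltac:(lra)). lra. }
    apply Rabs_def1; lra.
  - intros t Ht. set (E := fun v => exists s, 0 <= s < t /\ v = supOn f s).
    assert (EB : forall w, E w -> w <= supOn f t).
    { intros w [s [Hs ->]]. apply supOn_mono; auto; lra. }
    exists (real (Lub_Rbar E)). intros e He.
    assert (Hex : exists s0, 0 <= s0 < t /\ real (Lub_Rbar E) - e < supOn f s0).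
    { apply NNPP. intro Hn.
      assert (real (Lub_Rbar E) <= real (Lub_Rbar E) - e).
      { apply lub_le. exists (supOn f 0). exists 0. split; auto; lra.
        intros w [s [Hs ->]]. destruct (Rle_lt_dec (supOn f s) (real (Lub_Rbar E) - e)); auto.
        exfalso. apply Hn. exists s. auto. }
      lra. }
    destruct Hex as [s0 [Hs0 Hs0']]. exists (t - s0). split. lra.
    intros u Hu. assert (supOn f s0 <= supOn f u) by (apply supOn_mono; auto; lra).
    assert (supOn f u <= real (Lub_Rbar E)).
    { apply lub_ub. exists (supOn f t). auto. exists u. split; auto. lra. }
    apply Rabs_def1; lra.
Qed.

Lemma Delta_0 x : Delta x 0 = 0.
Proof. unfold Delta. destruct (Rle_dec 0 0); auto. lra. Qed.

Lemma cadlag_S_Delta x : cadlag x -> cadlag (S_Delta x).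
Proof.
  intros Hx. unfold S_Delta. apply supOn_cadlag. apply bnd_Delta; auto. apply Delta_0.
  intros tau Htau e He. destruct (small_jumps x Hx tau Htau e He) as [h [Hh Hh']].
  exists h. split; auto. intros s Hs Hs1. pose proof (Hh' s Hs Hs1). apply Rabs_le_between in H. lra.
Qed.

Lemma cadlag_S_Delta_abs x : cadlag x -> cadlag (S_Delta_abs x).
Proof.
  intros Hx. unfold S_Delta_abs. apply supOn_cadlag. apply bnd_abs, bnd_Delta; auto.
  rewrite Delta_0, Rabs_R0; auto.
  intros tau Htau e He. destruct (small_jumps x Hx tau Htau e He) as [h [Hh Hh']].
  exists h. split; auto.
Qed.

Lemma cadlag_plus x y : cadlag x -> cadlag y -> cadlag (fun t => x t + y t).
Proof.
  intros Hx Hy. apply cadlag_iff in Hx. apply cadlag_iff in Hy.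
  destruct Hx as [X1 X2]. destruct Hy as [Y1 Y2]. apply cadlag_iff. split.
  - intros t Ht e He. destruct (X1 t Ht (e/2) ltac:(lra)) as [d1 [Hd1 H1]].
    destruct (Y1 t Ht (e/2) ltac:(lra)) as [d2 [Hd2 H2]].
    exists (Rmin d1 d2). split. apply Rmin_glb_lt; auto. intros u Hu.
    pose proof (Rmin_l d1 d2). pose proof (Rmin_r d1 d2).
    specialize (H1 u ltac:(lra)). specialize (H2 u ltac:(lra)).
    apply Rabs_def2 in H1. apply Rabs_def2 in H2. apply Rabs_def1; lra.
  - intros t Ht. destruct (X2 t Ht) as [l1 L1]. destruct (Y2 t Ht) as [l2 L2].
    exists (l1 + l2). intros e He.
    destruct (L1 (e/2) ltac:(lra)) as [d1 [Hd1 H1]].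
    destruct (L2 (e/2) ltac:(lra)) as [d2 [Hd2 H2]].
    exists (Rmin d1 d2). split. apply Rmin_glb_lt; auto. intros u Hu.
    pose proof (Rmin_l d1 d2). pose proof (Rmin_r d1 d2).
    specialize (H1 u ltac:(lra)). specialize (H2 u ltac:(lra)).
    apply Rabs_def2 in H1. apply Rabs_def2 in H2. apply Rabs_def1; lra.
Qed.

Lemma cadlag_minus x y : cadlag x -> cadlag y -> cadlag (fun t => x t - y t).
Proof. intros Hx Hy. apply (cadlag_plus x (opp y)); auto using cadlag_opp. Qed.

Lemma cadlag_T1 b x : cadlag x -> cadlag (T1_rim b x).
Proof.
  intros Hx. destruct b; unfold T1_rim.
  - apply (cadlag_minus x (S_pmDelta true x)); auto. apply cadlag_S_Delta; first [exact Hx | exact (cadlag_pm _ x Hx)].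
  - apply (cadlag_plus x (S_pmDelta false x)); auto. apply cadlag_S_Delta; first [exact Hx | exact (cadlag_pm _ x Hx)].
Qed.

Lemma cadlag_Tt1 x : cadlag x -> cadlag (Tt1_rim x).
Proof.
  intros Hx. unfold Tt1_rim. apply (cadlag_minus x (S_Delta_abs x)); auto using cadlag_S_Delta_abs.
Qed.

Lemma lam_cont l : in_Lambda l -> forall t, I01 t -> forall e, 0 < e -> exists d, 0 < d /\
  forall u, I01 u -> Rabs (u - t) < d -> Rabs (l u - l t) < e.
Proof.
  intros [Hc _] t Ht e He. specialize (Hc t Ht). rewrite filterlim_locally in Hc.
  destruct (Hc (mkposreal e He)) as [d Hd]. exists d. split. apply cond_pos.
  intros u Hu Hut. apply (Hd u). exact Hut. exact Hu.
Qed.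

Lemma lam_le l u t : in_Lambda l -> I01 u -> I01 t -> u <= t -> l u <= l t.
Proof.
  intros [_ [Hm _]] Hu Ht H. destruct (Rle_lt_or_eq_dec u t H). left. auto. subst. lra.
Qed.

Lemma lam_le_inv l u t : in_Lambda l -> I01 u -> I01 t -> l u <= l t -> u <= t.
Proof.
  intros [_ [Hm _]] Hu Ht H. destruct (Rle_lt_dec u t); auto. specialize (Hm t u Ht Hu r). lra.
Qed.

Lemma lam_lt l u t : in_Lambda l -> I01 u -> I01 t -> u < t -> l u < l t.
Proof. intros [_ [Hm _]]. auto. Qed.

Lemma lam_I01 l t : in_Lambda l -> I01 t -> I01 (l t).
Proof.
  intros Hl Ht. pose proof Hl as [_ [_ [H0 H1]]]. unfold I01 in *. split.
  rewrite <- H0. apply lam_le; unfold I01; auto; lra.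
  rewrite <- H1. apply lam_le; unfold I01; auto; lra.
Qed.

Definition clamp t := Rmax 0 (Rmin t 1).

Lemma clamp_I01 t : I01 (clamp t).
Proof. unfold clamp, I01. split. apply Rmax_l. apply Rmax_lub. lra. apply Rmin_r. Qed.

Lemma clamp_id t : I01 t -> clamp t = t.
Proof. unfold clamp, I01. intros. rewrite Rmin_left by lra. rewrite Rmax_right; lra. Qed.

Lemma clamp_lip u t : Rabs (clamp u - clamp t) <= Rabs (u - t).
Proof.
  unfold clamp, Rmax, Rmin. repeat destruct Rle_dec; unfold Rabs; repeat destruct Rcase_abs; lra.
Qed.

Lemma lam_surj l v : in_Lambda l -> I01 v -> exists t, I01 t /\ l t = v.
Proof.
  intros Hl Hv. pose proof Hl as [_ [_ [H0 H1]]].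
  set (lc := fun t => l (clamp t)).
  assert (Hc : continuity lc).
  { intros t. unfold continuity_pt, continue_in, limit1_in, limit_in. simpl. unfold R_dist.
    intros e He. destruct (lam_cont l Hl (clamp t) (clamp_I01 t) e He) as [d [Hd Hd']].
    exists d. split; auto. intros u [_ Hu]. unfold lc. apply Hd'. apply clamp_I01.
    eapply Rle_lt_trans. apply clamp_lip. auto. }
  assert (Hlc0 : lc 0 = 0). { unfold lc. rewrite clamp_id; auto. unfold I01; lra. }
  assert (Hlc1 : lc 1 = 1). { unfold lc. rewrite clamp_id; auto. unfold I01; lra. }
  destruct (IVT_gen lc 0 1 v Hc) as [t [Ht Hlt]].
  { rewrite Hlc0, Hlc1. rewrite Rmin_left, Rmax_right by lra. exact Hv. }
  rewrite Rmin_left, Rmax_right in Ht by lra.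
  exists t. split; auto. unfold lc in Hlt. rewrite clamp_id in Hlt; auto.
Qed.

Lemma supOn_comp f l t : in_Lambda l -> I01 t ->
  supOn f (l t) = supOn (fun u => f (l u)) t.
Proof.
  intros Hl Ht. unfold supOn. f_equal. apply Lub_Rbar_eqset. intros v. split.
  - intros [s [Hs ->]]. pose proof (lam_I01 l t Hl Ht) as Hlt. unfold I01 in *.
    destruct (lam_surj l s Hl ltac:(unfold I01; lra)) as [u [Hu Hus]].
    exists u. split. split. apply Hu. apply (lam_le_inv l u t Hl Hu Ht). lra. now rewrite Hus.
  - intros [u [Hu ->]]. exists (l u). split; auto. assert (I01 u) by (unfold I01 in *; lra).
    split. apply (lam_I01 l u Hl H). apply lam_le; auto. apply Hu.
Qed.

Lemma supOn_ext f g t : (forall s, 0 <= s <= t -> f s = g s) -> supOn f t = supOn g t.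
Proof.
  intros H. unfold supOn. f_equal. apply Lub_Rbar_eqset. intros v. split;
  intros [s [Hs ->]]; exists s; split; auto. symmetry; auto.
Qed.

Lemma LL_comp x l s L : in_Lambda l -> 0 < s <= 1 -> LL x (l s) L -> LL (fun u => x (l u)) s L.
Proof.
  intros Hl Hs HL e He. destruct (HL e He) as [d [Hd Hd']].
  destruct (lam_cont l Hl s ltac:(unfold I01; lra) d Hd) as [d1 [Hd1 Hd1']].
  exists (Rmin d1 s). split. apply Rmin_glb_lt; lra. intros u Hu.
  pose proof (Rmin_l d1 s). pose proof (Rmin_r d1 s).
  assert (Hu01 : I01 u) by (unfold I01; lra).
  apply Hd'. specialize (Hd1' u Hu01 ltac:(apply Rabs_def1; lra)).
  pose proof (lam_lt l u s Hl Hu01 ltac:(unfold I01; lra) ltac:(lra)).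
  apply Rabs_def2 in Hd1'. lra.
Qed.

Lemma cadlag_comp x l : cadlag x -> in_Lambda l -> cadlag (fun u => x (l u)).
Proof.
  intros Hx Hl. pose proof Hl as [_ [_ [H0 H1]]]. pose proof Hx as Hx'.
  apply cadlag_iff in Hx'. destruct Hx' as [X1 X2]. apply cadlag_iff. split.
  - intros t Ht e He. assert (Ht' : I01 t) by (unfold I01; lra).
    pose proof (lam_I01 l t Hl Ht') as Hlt.
    assert (Hlt1 : l t < 1). { rewrite <- H1. apply lam_lt; unfold I01 in *; auto; lra. }
    destruct (X1 (l t) ltac:(unfold I01 in Hlt; lra) e He) as [d [Hd Hd']].
    destruct (lam_cont l Hl t Ht' d Hd) as [d1 [Hd1 Hd1']].
    exists (Rmin d1 (1 - t)). split. apply Rmin_glb_lt; lra. intros u Hu.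
    pose proof (Rmin_l d1 (1 - t)). pose proof (Rmin_r d1 (1 - t)).
    assert (Hu01 : I01 u) by (unfold I01; lra).
    apply Hd'. specialize (Hd1' u Hu01 ltac:(apply Rabs_def1; lra)).
    pose proof (lam_lt l t u Hl Ht' Hu01 ltac:(lra)).
    apply Rabs_def2 in Hd1'. lra.
  - intros t Ht. assert (Ht' : I01 t) by (unfold I01; lra).
    assert (Hlt0 : 0 < l t). { rewrite <- H0. apply lam_lt; unfold I01 in *; auto; lra. }
    pose proof (lam_I01 l t Hl Ht') as Hlt.
    destruct (X2 (l t) ltac:(unfold I01 in Hlt; lra)) as [L HL]. exists L.
    apply LL_comp; auto.
Qed.

Lemma Delta_comp x l s : cadlag x -> in_Lambda l -> I01 s ->
  Delta x (l s) = Delta (fun u => x (l u)) s.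
Proof.
  intros Hx Hl Hs. pose proof Hl as [_ [_ [H0 H1]]].
  destruct (Rle_lt_dec s 0) as [Hs0|Hs0].
  - assert (s = 0) by (unfold I01 in Hs; lra). subst. rewrite H0, !Delta_0. auto.
  - assert (Hls0 : 0 < l s). { rewrite <- H0. apply lam_lt; unfold I01 in *; auto; lra. }
    pose proof (lam_I01 l s Hl Hs) as Hls.
    destruct (cadlag_LL x (l s) Hx ltac:(unfold I01 in Hls; lra)) as [L HL].
    rewrite (Delta_LL x (l s) L Hls0 HL).
    rewrite (Delta_LL _ s L Hs0 (LL_comp x l s L Hl ltac:(unfold I01 in Hs; lra) HL)). auto.
Qed.

Lemma leftlim_loc x y s : (forall t, I01 t -> x t = y t) -> 0 < s <= 1 -> leftlim x s = leftlim y s.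
Proof.
  intros H Hs. unfold leftlim. f_equal. apply Lim_seq_ext_loc.
  destruct (small_inv s ltac:(lra)) as [N HN]. exists N. intros n Hn. specialize (HN n Hn).
  apply H. unfold I01. lra.
Qed.

Lemma Delta_loc x y s : (forall t, I01 t -> x t = y t) -> I01 s -> Delta x s = Delta y s.
Proof.
  intros H Hs. unfold Delta. destruct (Rle_dec s 0); auto.
  rewrite (H s Hs), (leftlim_loc x y s H); auto. unfold I01 in Hs; lra.
Qed.

Definition LOC (P : (R -> R) -> (R -> R)) := forall x y, (forall t, I01 t -> x t = y t) ->
  forall t, I01 t -> P x t = P y t.
Definition CP (P : (R -> R) -> (R -> R)) := forall x, cadlag x -> cadlag (P x).

Record Good (P : (R -> R) -> (R -> R)) (K : R) : Prop := {
  g_K : 0 <= K; g_PL : PL P K; g_COMP : Lambda_compatible P; g_LOC : LOC P }.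

Lemma Good_comp P Q K K' : Good P K -> Good Q K' -> CP Q -> Good (fun x => P (Q x)) (K * K').
Proof.
  intros [HK HPL HC HL] [HK' HPL' HC' HL'] HQ. split.
  - apply Rmult_le_pos; auto.
  - intros x y e Hx Hy H t Ht. cbv beta. rewrite Rmult_assoc. apply HPL; auto.
  - intros x l Hx Hl t Ht. cbv beta. rewrite HC by auto. apply HL; [|exact Ht]. intros s Hs. apply HC'; auto.
  - intros x y H t Ht. cbv beta. apply HL; auto.
Qed.

Lemma CP_comp P Q : CP P -> CP Q -> CP (fun x => P (Q x)).
Proof. intros HP HQ x Hx. auto. Qed.

Lemma Good_id : Good (fun x => x) 1.
Proof.
  split. lra. intros x y e _ _ H t Ht. rewrite Rmult_1_l. auto.
  intros x l _ _ t _. reflexivity. intros x y H t Ht. auto.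
Qed.

Lemma Good_Ssup : Good Ssup 1.
Proof.
  split. lra. apply PL_Ssup.
  - intros x l _ Hl t Ht. apply supOn_comp; auto.
  - intros x y H t Ht. apply supOn_ext. intros s Hs. apply H. unfold I01 in *; lra.
Qed.

Lemma Good_Ssup_abs : Good Ssup_abs 1.
Proof.
  split. lra. apply PL_Ssup_abs.
  - intros x l _ Hl t Ht. unfold Ssup_abs. apply (supOn_comp (fun s => Rabs (x s))); auto.
  - intros x y H t Ht. apply supOn_ext. intros s Hs. rewrite H; auto. unfold I01 in *; lra.
Qed.

Lemma COMP_S_Delta : Lambda_compatible S_Delta.
Proof.
  intros x l Hx Hl t Ht. unfold S_Delta. rewrite supOn_comp; auto. apply supOn_ext.
  intros s Hs. apply Delta_comp; auto. unfold I01 in *; lra.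
Qed.

Lemma LOC_S_Delta : LOC S_Delta.
Proof.
  intros x y H t Ht. unfold S_Delta. apply supOn_ext. intros s Hs. apply Delta_loc; auto.
  unfold I01 in *; lra.
Qed.

Lemma Good_S_pmDelta b : Good (S_pmDelta b) 2.
Proof.
  split. lra. apply PL_S_pmDelta.
  - intros x l Hx Hl t Ht. unfold S_pmDelta. rewrite COMP_S_Delta; auto using cadlag_pm.
    destruct b; reflexivity.
  - intros x y H t Ht. unfold S_pmDelta. apply LOC_S_Delta; auto. intros s Hs.
    destruct b; simpl; auto. unfold opp. rewrite H; auto.
Qed.

Lemma Good_S_Delta_abs : Good S_Delta_abs 2.
Proof.
  split. lra. apply PL_S_Delta_abs.
  - intros x l Hx Hl t Ht. unfold S_Delta_abs.
    rewrite (supOn_comp (fun s => Rabs (Delta x s))); auto. apply supOn_ext.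
    intros s Hs. rewrite Delta_comp; auto. unfold I01 in *; lra.
  - intros x y H t Ht. unfold S_Delta_abs. apply supOn_ext. intros s Hs. rewrite (Delta_loc x y); auto.
    unfold I01 in *; lra.
Qed.

Lemma Good_T1 b : Good (T1_rim b) 3.
Proof.
  destruct (Good_S_pmDelta b) as [_ _ HC HL].
  split. lra. apply PL_T1.
  - intros x l Hx Hl t Ht. unfold T1_rim. rewrite HC; auto.
  - intros x y H t Ht. unfold T1_rim. rewrite (HL x y H t Ht), H; auto.
Qed.

Lemma CP_T1 b : CP (T1_rim b).
Proof. intros x Hx. apply cadlag_T1; auto. Qed.

Lemma Good_Tt1 : Good Tt1_rim 3.
Proof.
  destruct Good_S_Delta_abs as [_ _ HC HL].
  split. lra. apply PL_Tt1.
  - intros x l Hx Hl t Ht. unfold Tt1_rim. rewrite HC; auto.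
  - intros x y H t Ht. unfold Tt1_rim. rewrite (HL x y H t Ht), H; auto.
Qed.

Lemma CP_Tt1 : CP Tt1_rim.
Proof. intros x Hx. apply cadlag_Tt1; auto. Qed.

Lemma Good_T_rim r b : Good (T_rim r b) (3 ^ r) /\ CP (T_rim r b).
Proof.
  induction r as [|r [IH1 IH2]].
  - split. simpl. apply Good_id. intros x Hx. exact Hx.
  - split.
    + change (Good (fun x => T1_rim b (T_rim r b x)) (3 * 3 ^ r)).
      apply Good_comp; auto. apply Good_T1.
    + change (CP (fun x => T1_rim b (T_rim r b x))). apply CP_comp; auto. apply CP_T1.
Qed.

Lemma Good_Tt_rim r : Good (Tt_rim r) (3 ^ r) /\ CP (Tt_rim r).
Proof.
  induction r as [|r [IH1 IH2]].
  - split. simpl. apply Good_id. intros x Hx. exact Hx.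
  - split.
    + change (Good (fun x => Tt1_rim (Tt_rim r x)) (3 * 3 ^ r)).
      apply Good_comp; auto. apply Good_Tt1.
    + change (CP (fun x => Tt1_rim (Tt_rim r x))). apply CP_comp; auto. apply CP_Tt1.
Qed.

Lemma family_Good P : in_family P -> exists K, Good P K.
Proof.
  intros H. destruct H as [| | | | |r b Hr|r b Hr|r s Hr Hs|r Hr|r Hr].
  - exists 1. exact Good_Ssup.
  - exists 1. exact Good_Ssup_abs.
  - exists 2. exact (Good_S_pmDelta true).
  - exists 2. exact (Good_S_pmDelta false).
  - exists 2. exact Good_S_Delta_abs.
  - exists (3 ^ r). exact (proj1 (Good_T_rim r b)).
  - exists (2 * 3 ^ (r - 1)). unfold S_rim. destruct (Good_T_rim (r - 1) b) as [G1 G2].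
    exact (Good_comp (S_pmDelta b) (T_rim (r-1) b) _ _ (Good_S_pmDelta b) G1 G2).
  - exists (3 ^ r * 3 ^ s). unfold T_rim2. destruct (Good_T_rim r true) as [G1 G2].
    destruct (Good_T_rim s false) as [G3 G4].
    exact (Good_comp (T_rim r true) (T_rim s false) _ _ G1 G3 G4).
  - exists (3 ^ r). exact (proj1 (Good_Tt_rim r)).
  - exists (2 * 3 ^ (r - 1)). unfold St_rim. destruct (Good_Tt_rim (r - 1)) as [G1 G2].
    exact (Good_comp S_Delta_abs (Tt_rim (r-1)) _ _ Good_S_Delta_abs G1 G2).
Qed.

Lemma Good_main P K : Good P K ->
  norm_lipschitz P /\ Lambda_compatible P /\ (forall x, cadlag x -> jointly_J1_continuous_at P x).
Proof.
  intros [HK HPL HC HL]. split; [|split; auto].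
  - exists K. split; auto. intros x y Hx Hy.
    destruct (cadlag_bounded _ (cadlag_minus x y Hx Hy)) as [B HB].
    set (M := supnorm (fun t => x t - y t)).
    assert (HM : forall s, I01 s -> Rabs (x s - y s) <= M).
    { intros s Hs. unfold M, supnorm. apply lub_ub.
      exists B. intros w [u [Hu ->]]. auto. exists s. auto. }
    unfold supnorm at 1. apply lub_le.
    + exists (Rabs (P x 0 - P y 0)). exists 0. split; auto. unfold I01; lra.
    + intros w [u [Hu ->]]. apply HPL; auto.
  - intros x Hx xn Hxn [ln [Hln [H1 H2]]]. exists ln. split; auto. split; auto. split; auto.
    intros eps Heps. destruct (H2 (eps / (K + 1))) as [N HN].
    { apply Rdiv_lt_0_compat; lra. }
    exists N. intros n Hn t Ht. rewrite HC; auto.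
    assert (Hb := HPL (fun u => xn n (ln n u)) x (eps / (K + 1)) (cadlag_comp _ _ (Hxn n) (Hln n)) Hx
                    (fun s Hs => HN n Hn s Hs) t Ht).
    eapply Rle_trans. exact Hb.
    assert (E : K * (eps / (K + 1)) = eps - eps / (K + 1)) by (field; lra).
    rewrite E. assert (0 < eps / (K + 1)) by (apply Rdiv_lt_0_compat; lra). lra.
Qed.

Theorem proposition2p2 :
  forall Psi : (R -> R) -> (R -> R), in_family Psi ->
    norm_lipschitz Psi /\ Lambda_compatible Psi /\
    (forall x, cadlag x -> jointly_J1_continuous_at Psi x).
Proof.
  intros Psi H. destruct (family_Good Psi H) as [K HK]. exact (Good_main Psi K HK).
Qed.
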